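(* Let $\mathcal{A}$ be a finite nonempty set of positive integers, let $k\ge 1$ be an integer and let $k_1\ge k_2\ge 1$ be real numbers with $k+1>k_2$. Set $X=\max\mathcal{A}$, $z=X^{1/k_1}$, $y=X^{1/k_2}$ and $\lambda=k+1-k_2$. Suppose that for some constants $c>0$ and $0<\delta<1$, $$\sum_{\substack{p\text{ prime}\\ z\le p<y}}|\mathcal{A}_{p^2}|\le c|\mathcal{A}|^{1-\delta}.$$ Then $$r_k(\mathcal{A})\ge \frac{\lambda}{k}S(\mathcal{A},z)-\frac1k\sum_{\substack{p\text{ prime}\\ z\le p<y}}\left(1-\frac{\log p}{\log y}\right)S(\mathcal{A}_p,z)-\frac{\lambda c}{k}|\mathcal{A}|^{1-\delta}.$$
   Context: All $p$ denote primes. For a positive integer $d$ and a finite set $\mathcal{B}$ of positive integers, $\mathcal{B}_d=\{b\in\mathcal{B}: d\mid b\}$. $P(z)=\prod_{p<z}p$, and $S(\mathcal{B},z)=\#\{b\in\mathcal{B}:\gcd(b,P(z))=1\}$. $r_k(\mathcal{A})=\#\{a\in\mathcal{A}:\Omega(a)\le k\}$, where $\Omega(a)$ is the number of prime factors of $a$ counted with multiplicity. *)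

(* Defs.v *)
From Stdlib Require Import Reals.
From mathcomp Require Import all_boot.

Set Implicit Arguments.
Unset Strict Implicit.
Unset Printing Implicit Defensive.

Definition Rlt_bool (x y : R) : bool := if Rlt_dec x y then true else false.
Definition Rle_bool (x y : R) : bool := if Rle_dec x y then true else false.

(* Finite sets of positive integers are represented by duplicate-free lists. *)

Definition multiples (d : nat) (B : seq nat) : seq nat := [seq b <- B | d %| b].

(* an upper bound (in nat) for reals: every p with INR p < z satisfies p < ubound z *)
Definition ubound (z : R) : nat := Z.to_nat (up z).

Definition Pz (z : R) : nat :=
  \prod_(p <- index_iota 0 (ubound z) | prime p && Rlt_bool (INR p) z) p.

Definition Ssieve (B : seq nat) (z : R) : nat :=
  count (fun b => gcdn b (Pz z) == 1) B.

Definition bigOmega (a : nat) : nat := \sum_(p <- primes a) logn p a.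

Definition rk (k : nat) (A : seq nat) : nat := count (fun a => bigOmega a <= k) A.

Definition sum_primes_between (z y : R) (f : nat -> R) : R :=
  \big[Rplus/R0]_(p <- index_iota 0 (ubound y)
                    | prime p && Rle_bool z (INR p) && Rlt_bool (INR p) y) f p.

(* Main.v *)
Require Import Defs.
From Stdlib Require Import Reals.
From mathcomp Require Import all_boot.
Open Scope R_scope.
From HB Require Import structures.
From Stdlib Require Import Lra Lia.


Lemma Rplus_assoc' : associative Rplus.
Proof. move=> x y z; ring. Qed.
HB.instance Definition _ := Monoid.isComLaw.Build R R0 Rplus Rplus_assoc' Rplus_comm Rplus_0_l.

Lemma Rlt_boolP x y : reflect (x < y) (Rlt_bool x y).
Proof. rewrite /Rlt_bool; case: Rlt_dec => h; constructor => //. Qed.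
Lemma Rle_boolP x y : reflect (x <= y) (Rle_bool x y).
Proof. rewrite /Rle_bool; case: Rle_dec => h; constructor => //. Qed.

Lemma ln_le' x y : 0 < x -> x <= y -> ln x <= ln y.
Proof. move=> hx [h|->]; [left; apply ln_increasing => // | right => //]. Qed.

Lemma ubound_lt (p : nat) z : INR p < z -> (p < ubound z)%N.
Proof.
move=> h; have [h1 _] := archimed z.
rewrite INR_IZR_INZ in h.
have : (Z.of_nat p < up z)%Z by apply lt_IZR; lra.
rewrite /ubound => hz; apply/ltP; lia.
Qed.

Lemma Rsum_le (I : Type) (s : seq I) (P : pred I) (f g : I -> R) :
  (forall i, P i -> f i <= g i) ->
  \big[Rplus/R0]_(i <- s | P i) f i <= \big[Rplus/R0]_(i <- s | P i) g i.
Proof.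
move=> h; elim: s => [|x s IH]; rewrite ?big_nil ?big_cons; first lra.
case: ifP => hx //; have := h x hx; lra.
Qed.

Lemma Rsum_ge0 (I : Type) (s : seq I) (P : pred I) (f : I -> R) :
  (forall i, P i -> 0 <= f i) -> 0 <= \big[Rplus/R0]_(i <- s | P i) f i.
Proof.
move=> h; elim: s => [|x s IH]; rewrite ?big_nil ?big_cons; first lra.
case: ifP => hx //; have := h x hx; lra.
Qed.

Lemma Rsum_ge_term (I : eqType) (s : seq I) (P : pred I) (f : I -> R) x :
  x \in s -> P x -> (forall i, P i -> 0 <= f i) ->
  f x <= \big[Rplus/R0]_(i <- s | P i) f i.
Proof.
move=> hs hP h; elim: s hs => [|y s IH] //; rewrite inE big_cons => /orP [/eqP <-|hs].
  rewrite hP; have := @Rsum_ge0 _ s P f h; lra.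
have := IH hs; case: ifP => // hy; have := h y hy; lra.
Qed.

Lemma Rsum_INR (I : Type) (s : seq I) (P : pred I) (f : I -> nat) :
  INR (\sum_(i <- s | P i) f i)%N = \big[Rplus/R0]_(i <- s | P i) INR (f i).
Proof.
elim: s => [|x s IH]; rewrite ?big_nil ?big_cons //.
case: ifP => // _; by rewrite -plusE plus_INR IH.
Qed.

Lemma Rsum_lin (I : Type) (s : seq I) (l : I -> R) (g : I -> R) L :
  \big[Rplus/R0]_(i <- s) (l i * (1 - g i / L)) =
  \big[Rplus/R0]_(i <- s) l i - (\big[Rplus/R0]_(i <- s) (l i * g i)) / L.
Proof.
elim: s => [|x s IH]; rewrite ?big_nil ?big_cons; first (rewrite /Rdiv; ring).
rewrite IH /Rdiv; ring.
Qed.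

Lemma expn_INR (p n : nat) : INR (p ^ n)%N = INR p ^ n.
Proof. elim: n => [|n IH] //=; by rewrite expnS -multE mult_INR IH. Qed.

Lemma ln_prod (s : seq nat) (e : nat -> nat) :
  all (fun p => (0 < p)%N) s ->
  0 < INR (\prod_(p <- s) p ^ e p)%N /\
  ln (INR (\prod_(p <- s) p ^ e p)%N) = \big[Rplus/R0]_(p <- s) (INR (e p) * ln (INR p)).
Proof.
elim: s => [|x s IH]; rewrite ?big_nil ?big_cons /=.
  split; [lra| exact ln_1].
move=> /andP [hx hs]; have [h1 h2] := IH hs.
have hxp : 0 < INR x by apply lt_0_INR; apply/ltP.
rewrite -multE mult_INR expn_INR; split.
  apply Rmult_lt_0_compat => //; apply pow_lt => //.
rewrite ln_mult ?h2 ?ln_pow //; apply pow_lt => //.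
Qed.

Lemma dvd_prod_seq (s : seq nat) (P : pred nat) x :
  x \in s -> P x -> (x %| \prod_(i <- s | P i) i)%N.
Proof.
elim: s => [|y s IH] //; rewrite inE big_cons => /orP [/eqP <-|hs] hP.
  by rewrite hP dvdn_mulr.
case: ifP => _; last exact: IH.
by rewrite dvdn_mull // IH.
Qed.

Lemma Rsum_le_seq (I : eqType) (s : seq I) (P : pred I) (f g : I -> R) :
  (forall i, i \in s -> P i -> f i <= g i) ->
  \big[Rplus/R0]_(i <- s | P i) f i <= \big[Rplus/R0]_(i <- s | P i) g i.
Proof.
elim: s => [|x s IH] h; rewrite ?big_nil ?big_cons; first lra.
have IH' := IH (fun i hi => h i (@mem_behead _ (x :: s) i hi)).
case: ifP => hx //; have := h x (mem_head _ _) hx; lra.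
Qed.

Lemma div_le1 a b : 0 < b -> a <= b -> a / b <= 1.
Proof.
move=> hb hab; apply (Rmult_le_reg_r b) => //.
rewrite /Rdiv Rmult_assoc Rinv_l; lra.
Qed.

Lemma sif_ge a z p : gcdn a (Pz z) == 1%N -> prime p -> (p %| a)%N -> z <= INR p.
Proof.
move=> /eqP hg hp hpa; apply Rnot_lt_le => hlt.
have hd : (p %| Pz z)%N.
  apply: dvd_prod_seq; first by rewrite mem_index_iota /= ubound_lt.
  by rewrite hp /=; apply/Rlt_boolP.
have : (p %| gcdn a (Pz z))%N by rewrite dvdn_gcd hpa hd.
rewrite hg dvdn1 => /eqP h1; by rewrite h1 in hp.
Qed.

Lemma INR_prime_ge2 p : prime p -> 2 <= INR p.
Proof. move=> hp; have := prime_gt1 hp => /leP h; apply (le_INR 2) in h; simpl in h; lra. Qed.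

Lemma elem (a k X : nat) (k2 z y : R) :
  (0 < a)%N -> (a <= X)%N -> (1 <= k)%N -> k2 >= 1 -> INR k + 1 > k2 ->
  ln y = 1 / k2 * ln (INR X) -> 0 < y ->
  gcdn a (Pz z) == 1%N ->
  (INR k + 1 - k2) - sum_primes_between z y (fun p => (1 - ln (INR p) / ln y) * INR (p %| a)%N)
  <= INR k * INR (bigOmega a <= k)%N + (INR k + 1 - k2) * sum_primes_between z y (fun p => INR (p * p %| a)%N).
Proof.
move=> a0 aX k1 hk2 hk hly y0 sif.
set lam := INR k + 1 - k2.
have hK : 1 <= INR k by apply (le_INR 1); apply/leP.
have hF : forall p, prime p && Rle_bool z (INR p) && Rlt_bool (INR p) y -> 0 <= 1 - ln (INR p) / ln y.
  move=> p /andP[/andP[hp _] /Rlt_boolP hpy].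
  have h2 := INR_prime_ge2 p hp.
  have hl : ln (INR p) < ln y by apply ln_increasing; lra.
  have hl0 : 0 < ln (INR p) by rewrite -ln_1; apply ln_increasing; lra.
  have := div_le1 (ln (INR p)) (ln y) ltac:(lra) ltac:(lra); lra.
have hS1 : 0 <= sum_primes_between z y (fun p => (1 - ln (INR p) / ln y) * INR (p %| a)%N).
  apply Rsum_ge0 => p hp; apply Rmult_le_pos; [exact: hF | exact: pos_INR].
have hS2 : 0 <= sum_primes_between z y (fun p => INR (p * p %| a)%N).
  apply Rsum_ge0 => p _; exact: pos_INR.
have hlam : 0 < lam by rewrite /lam; lra.
have hlS2 := Rmult_le_pos _ _ (Rlt_le _ _ hlam) hS2.
case ho: (bigOmega a <= k)%N.
  rewrite /=; rewrite /lam in hlS2 |- *; lra.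
case hsq: (has (fun p => prime p && Rle_bool z (INR p) && Rlt_bool (INR p) y && (p * p %| a)%N) (index_iota 0 (ubound y))).
  case/hasP: hsq => p hpin /andP [hQ hpp].
  have h1 : INR (p * p %| a)%N <= sum_primes_between z y (fun p => INR (p * p %| a)%N).
    rewrite /sum_primes_between; apply: (@Rsum_ge_term _ _ (fun p => prime p && Rle_bool z (INR p) && Rlt_bool (INR p) y) (fun p => INR (p * p %| a)%N) p) => //.
    move=> i _; exact: pos_INR.
  rewrite hpp /= in h1.
  have := Rmult_le_compat_l lam _ _ (Rlt_le _ _ hlam) h1.
  rewrite /= in hS1 |- *; rewrite /lam; have := pos_INR 0; lra.
have a1 : (1 < a)%N.
  move: (ho) (a0); case: (a) => [|[|n]] //.
  rewrite /bigOmega; have -> : primes 1 = [::] by [].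
  by rewrite big_nil.
set Q := fun p => prime p && Rle_bool z (INR p) && Rlt_bool (INR p) y.
set P := index_iota 0 (ubound y).
have hmem : forall p, prime p -> (p %| a)%N -> INR p < y -> (p \in P) && Q p.
  move=> p hp hd hy; have hz := sif_ge a z p sif hp hd.
  rewrite /P /Q mem_index_iota /= ubound_lt // hp /=.
  by apply/andP; split; [apply/Rle_boolP|apply/Rlt_boolP].
have hno : forall p, p \in P -> Q p -> ~~ (p * p %| a)%N.
  move=> p hp hQ; apply/negP => hd; move/negbT/hasPn: hsq => /(_ p hp).
  by rewrite /Q in hQ; rewrite hQ hd.
have hX2 : (2 <= X)%N := leq_trans a1 aX.
have hLX : 0 < ln (INR X).
  rewrite -ln_1; apply ln_increasing; first lra.
  have := le_INR 2 X ltac:(apply/leP; exact hX2); simpl; lra.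
have hk20 : 0 < k2 by lra.
have hly0 : 0 < ln y.
  rewrite hly; apply Rmult_lt_0_compat => //; apply Rdiv_lt_0_compat; lra.
have hperm : perm_eq [seq p <- P | Q p && (p %| a)%N] [seq p <- primes a | Rlt_bool (INR p) y].
  apply: uniq_perm; [by rewrite filter_uniq // iota_uniq | by rewrite filter_uniq // primes_uniq |].
  move=> x; rewrite !mem_filter mem_primes; apply/idP/idP.
    case/andP => /andP [/andP [/andP [hp _] hy] hd] _; by rewrite hy hp a0 hd.
  case/andP => /Rlt_boolP hy /and3P [hp _ hd].
  have /andP [h1 h2] := hmem x hp hd hy.
  by rewrite h2 hd h1.
suff hmain : INR k + 1 - k2 <= sum_primes_between z y (fun p => (1 - ln (INR p) / ln y) * INR (p %| a)%N).
  rewrite /= Rmult_0_r; rewrite /lam in hlS2 |- *; lra.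
have e1 : sum_primes_between z y (fun p => (1 - ln (INR p) / ln y) * INR (p %| a)%N)
   = \big[Rplus/R0]_(p <- P | Q p && (p %| a)%N) (1 - ln (INR p) / ln y).
  rewrite big_mkcondr; apply eq_bigr => p _; case: (p %| a)%N; rewrite /=; ring.
rewrite e1 -big_filter (perm_big _ hperm) big_filter.
have hle : \big[Rplus/R0]_(p <- primes a) (INR (logn p a) * (1 - ln (INR p) / ln y))
   <= \big[Rplus/R0]_(p <- primes a | Rlt_bool (INR p) y) (1 - ln (INR p) / ln y).
  rewrite [X in _ <= X]big_mkcond; apply Rsum_le_seq => p hp _.
  have hpa := hp; rewrite mem_primes in hpa; case/and3P: hpa => hpp _ hpd.
  case: ifP => /Rlt_boolP hy.
    have hl : logn p a = 1%N.
      apply/eqP; rewrite eqn_leq logn_gt0 hp andbT leqNgt; apply/negP => h2.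
      have : (p ^ 2 %| a)%N by rewrite pfactor_dvdn.
      rewrite -mulnn; have /andP [h3 h4] := hmem p hpp hpd hy.
      by move/negP: (hno p h3 h4).
    rewrite hl /=; lra.
  have hp2 := INR_prime_ge2 p hpp.
  have : ln y <= ln (INR p) by apply ln_le'; lra.
  move=> hl.
  have : 1 <= ln (INR p) / ln y.
    apply (Rmult_le_reg_r (ln y)) => //; rewrite /Rdiv Rmult_assoc Rinv_l; lra.
  move=> h1; have := pos_INR (logn p a) => h0.
  have := Rmult_le_compat_l (INR (logn p a)) (1 - ln (INR p) / ln y) 0 h0 ltac:(lra); lra.
apply: Rle_trans hle.
rewrite Rsum_lin -Rsum_INR.
have ea : a = (\prod_(p <- primes a) p ^ logn p a)%N.
  by rewrite {1}(prod_prime_decomp a0) prime_decompE big_map.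
have hall : all (fun p => (0 < p)%N) (primes a).
  apply/allP => p; rewrite mem_primes => /and3P [hp _ _]; exact: prime_gt0.
have [_ hln] := ln_prod (primes a) (fun p => logn p a) hall.
rewrite -hln -ea.
have hO : INR k + 1 <= INR (\sum_(p <- primes a) logn p a)%N.
  rewrite -S_INR; apply le_INR; apply/leP; rewrite ltnNge; move: ho; rewrite /bigOmega => ->; done.
have ha1 : 1 < INR a by have := lt_INR 1 a ltac:(apply/ltP; exact a1); simpl; lra.
have hLa : 0 < ln (INR a) by rewrite -ln_1; apply ln_increasing; lra.
have hLaX : ln (INR a) <= ln (INR X) by apply ln_le'; [lra | apply le_INR; apply/leP].
have hr : ln (INR a) / ln y <= k2.
  rewrite hly.
  have -> : ln (INR a) / (1 / k2 * ln (INR X)) = k2 * (ln (INR a) / ln (INR X)) by field; lra.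
  have := div_le1 (ln (INR a)) (ln (INR X)) hLX hLaX => hd.
  have := Rmult_le_compat_l k2 _ _ (Rlt_le _ _ hk20) hd; lra.
lra.
Qed.

Lemma SP_split z y f g : sum_primes_between z y (fun p => f p + g p) = sum_primes_between z y f + sum_primes_between z y g.
Proof. by rewrite /sum_primes_between big_split. Qed.
Lemma SP_ext z y f g : (forall p, f p = g p) -> sum_primes_between z y f = sum_primes_between z y g.
Proof. by move=> h; rewrite /sum_primes_between; apply eq_bigr. Qed.
Lemma SP_zero z y f : (forall p, f p = 0) -> sum_primes_between z y f = 0.
Proof. move=> h; rewrite /sum_primes_between big1 // => p _; exact: h. Qed.

Lemma list_ineq (B : seq nat) k X k2 z y :
  all (fun a => (0 < a)%N && (a <= X)%N) B -> (1 <= k)%N -> k2 >= 1 -> INR k + 1 > k2 ->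
  ln y = 1 / k2 * ln (INR X) -> 0 < y ->
  (INR k + 1 - k2) * INR (Ssieve B z)
   - sum_primes_between z y (fun p => (1 - ln (INR p) / ln y) * INR (Ssieve (multiples p B) z))
  <= INR k * INR (rk k B) + (INR k + 1 - k2) * sum_primes_between z y (fun p => INR (size (multiples (p * p) B))).
Proof.
move=> hB k1 hk2 hk hly y0.
elim: B hB => [|a B IH] /=.
  move=> _; rewrite /Ssieve /rk /=.
  rewrite (SP_zero z y (fun p => (1 - ln (INR p) / ln y) * INR (count (fun b => gcdn b (Pz z) == 1%N) (multiples p [::])))); last by move=> p; rewrite /=; ring.
  rewrite SP_zero; last by [].
  lra.
move=> /andP [/andP [a0 aX] hB]; have {}IH := IH hB.
set F := fun p : nat => 1 - ln (INR p) / ln y.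
have e1 : forall p, Ssieve (multiples p (a :: B)) z = (((p %| a) && (gcdn a (Pz z) == 1%N)) + Ssieve (multiples p B) z)%N.
  by move=> p; rewrite /Ssieve /multiples /=; case: (p %| a)%N.
have e2 : forall p, size (multiples p (a :: B)) = ((p %| a) + size (multiples p B))%N.
  by move=> p; rewrite /multiples /=; case: (p %| a)%N.
rewrite (SP_ext z y (fun p => (1 - ln (INR p) / ln y) * INR (Ssieve (multiples p (a :: B)) z)) (fun p => F p * INR ((p %| a) && (gcdn a (Pz z) == 1%N)) + F p * INR (Ssieve (multiples p B) z))); last first.
  by move=> p; rewrite e1 -plusE plus_INR /F; ring.
rewrite (SP_ext z y (fun p => INR (size (multiples (p * p) (a :: B)))) (fun p => INR (p * p %| a)%N + INR (size (multiples (p * p) B)))); last first.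
  by move=> p; rewrite e2 -plusE plus_INR.
rewrite !SP_split.
rewrite /Ssieve /rk /= -!plusE !plus_INR.
rewrite /Ssieve /rk in IH.
have hO := pos_INR (bigOmega a <= k)%N.
have hS2 : 0 <= sum_primes_between z y (fun p => INR (p * p %| a)%N).
  apply Rsum_ge0 => p _; exact: pos_INR.
have hlS2 : 0 <= (INR k + 1 - k2) * sum_primes_between z y (fun p => INR (p * p %| a)%N).
  apply Rmult_le_pos => //; lra.
case hs: (gcdn a (Pz z) == 1%N).
  have := elem a k X k2 z y a0 aX k1 hk2 hk hly y0 hs.
  rewrite (SP_ext z y (fun p => F p * INR ((p %| a) && true)) (fun p => (1 - ln (INR p) / ln y) * INR (p %| a)%N)); last first.
    by move=> p; rewrite andbT.
  rewrite /F /=; lra.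
have hz : sum_primes_between z y (fun p => F p * INR ((p %| a) && false)) = 0.
  by apply SP_zero => p; rewrite andbF /=; ring.
rewrite hz /=.
have := pos_INR k; rewrite /F in IH |- *; nra.
Qed.

Theorem lemma3p6 (A : seq nat) (k : nat) (k1 k2 c delta : R) :
  uniq A -> A <> [::] -> all (fun a => (0 < a)%N) A ->
  (1 <= k)%N ->
  k1 >= k2 -> k2 >= 1 -> INR k + 1 > k2 ->
  c > 0 -> 0 < delta < 1 ->
  let X := (\max_(a <- A) a)%N in
  let z := Rpower (INR X) (1 / k1) in
  let y := Rpower (INR X) (1 / k2) in
  let lam := INR k + 1 - k2 in
  sum_primes_between z y (fun p => INR (size (multiples (p * p)%N A)))
     <= c * Rpower (INR (size A)) (1 - delta) ->
  INR (rk k A) >=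
     lam / INR k * INR (Ssieve A z)
     - 1 / INR k * sum_primes_between z y
         (fun p => (1 - ln (INR p) / ln y) * INR (Ssieve (multiples p A) z))
     - lam * c / INR k * Rpower (INR (size A)) (1 - delta).
Proof.
move=> _ _ hpos k1' hk12 hk2 hk hc hd X z y lam hsum.
have hall : all (fun a => (0 < a)%N && (a <= X)%N) A.
  apply/allP => a ha; rewrite (allP hpos a ha) /=.
  rewrite /X; exact: (@leq_bigmax_seq _ A xpredT (fun a => a) a ha).
have hly : ln y = 1 / k2 * ln (INR X) by rewrite /y /Rpower ln_exp.
have y0 : 0 < y by rewrite /y /Rpower; apply exp_pos.
have L := list_ineq A k X k2 z y hall k1' hk2 hk hly y0.
have hK : 1 <= INR k by apply (le_INR 1); apply/leP.
have hlam : 0 < lam by rewrite /lam; lra.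
set S := INR (Ssieve A z) in L |- *.
set T := sum_primes_between z y _ in L |- *.
set U := sum_primes_between z y _ in L hsum.
set N := Rpower (INR (size A)) (1 - delta) in hsum |- *.
set r := INR (rk k A) in L |- *.
have hU : lam * U <= lam * (c * N) by apply Rmult_le_compat_l; lra.
apply Rle_ge; apply (Rmult_le_reg_l (INR k)); first lra.
have -> : INR k * (lam / INR k * S - 1 / INR k * T - lam * c / INR k * N) = lam * S - T - lam * (c * N).
  field; lra.
rewrite /lam in hU |- *; lra.
Qed.
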